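(* Every (possibly rotated) rectangle $R\subset\mathbb{R}^2$ with side lengths $a$ and $b$ satisfies $N(R)\leqslant(a+\sqrt2)(b+\sqrt2)$.
   Context: For $D\subseteq\mathbb{R}^2$, the integer cardinality is $N(D)=|\mathbb{Z}^2\cap D|$, the number of integer points in $D$. *)

(* Defs.v *)
From mathcomp Require Import all_boot all_order all_algebra.
From mathcomp Require Import reals.
Set Implicit Arguments. Unset Strict Implicit. Unset Printing Implicit Defensive.
Import Order.TTheory GRing.Theory Num.Theory.
Local Open Scope ring_scope.

(* The (possibly rotated) closed rectangle with corner p = (p1,p2), first side
   along the unit vector (c, s) of length a, second side along the orthogonal
   unit vector (-s, c) of length b:
     { p + t (c,s) + r (-s,c) : 0 <= t <= a, 0 <= r <= b }. *)
Definition rect (R : realType) (p1 p2 c s a b : R) (x : R * R) : Prop :=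
  exists t r : R, [/\ 0 <= t <= a, 0 <= r <= b,
    x.1 = p1 + t * c - r * s & x.2 = p2 + t * s + r * c].

(* N(D) <= k : the number of integer points in D is at most k, i.e. every
   duplicate-free list of points of Z^2 lying in D has length at most k
   (in particular Z^2 \cap D is finite). *)
Definition N_le (R : realType) (D : R * R -> Prop) (k : R) : Prop :=
  forall l : seq (int * int), uniq l ->
    (forall z, z \in l -> D ((z.1)%:~R, (z.2)%:~R)) ->
    (size l)%:R <= k.

(* Main.v *)
Require Import Defs.
From mathcomp Require Import all_boot all_order all_algebra.
From mathcomp Require Import reals.
From mathcomp Require Import zify ring lra.
Import Order.TTheory GRing.Theory Num.Theory.
Local Open Scope ring_scope.

Lemma count_box (l : seq (int*int)) (x0 y0 : int) (M1 M2 : nat):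
 uniq l -> (forall z, z \in l -> (x0 <= z.1 < x0 + M1%:Z) /\ (y0 <= z.2 < y0 + M2%:Z)) ->
 (size l <= M1 * M2)%N.
Proof.
move=> ul H.
set s := [seq (x0 + (i%:Z), y0 + (j%:Z)) | i <- iota 0 M1, j <- iota 0 M2].
have -> : (M1 * M2 = size s)%N by rewrite size_allpairs !size_iota.
apply: uniq_leq_size => // -[x y] /H /= [/andP[h1 h2] /andP[h3 h4]].
apply/allpairsP; exists (`|x - x0|%N, `|y - y0|%N) => /=; split.
- rewrite mem_iota; lia.
- rewrite mem_iota; lia.
- congr pair; lia.
Qed.

Lemma int_itv (R : realType) (k : int) (m L : R): 0 <= L ->
  m - L/2 <= k%:~R <= m + L/2 ->
  (Num.ceil (m - L/2) <= k < Num.ceil (m - L/2) + (`|Num.floor L|%N.+1)%:Z).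
Proof.
move=> L0 /andP[h1 h2].
have f0 : 0 <= Num.floor L by rewrite floor_ge0.
have c1 : Num.ceil (m - L/2) <= k by rewrite ceil_le_int.
have c2 : k - Num.ceil (m - L/2) <= Num.floor L.
  rewrite floor_ge_int rmorphB /=.
  have := ceil_ge (m - L/2); lra.
rewrite c1 /=; lia.
Qed.

Lemma nat_bound (R : realType) (L : R) : 0 <= L -> (`|Num.floor L|%N.+1)%:R <= L + 1.
Proof.
move=> L0; have f0 : 0 <= Num.floor L by rewrite floor_ge0.
have -> : (`|Num.floor L|%N.+1)%:R = (Num.floor L + 1)%:~R :> R.
  have e : Num.floor L + 1 = (`|Num.floor L|%N.+1)%:Z by lia.
  by rewrite e.
rewrite rmorphD /=; have := floor_le L; lra.
Qed.

Lemma count_fib (R : realType) (l : seq (int*int)) (m : int -> R) (m2 L1 L2 : R):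
 0 <= L1 -> 0 <= L2 -> uniq l ->
 (forall z, z \in l -> `|z.2%:~R - m2| <= L2/2 /\ `|z.1%:~R - m z.2| <= L1/2) ->
 (size l)%:R <= (L1+1)*(L2+1).
Proof.
move=> L10 L20 ul H.
pose f (z : int * int) := (z.1 - Num.ceil (m z.2 - L1/2), z.2).
have finj : {in l &, injective f}.
  move=> [x y] [x' y'] _ _ [] /= e1 e2; subst y'; congr pair; lia.
have := @count_box (map f l) 0 (Num.ceil (m2 - L2/2)) (`|Num.floor L1|%N.+1) (`|Num.floor L2|%N.+1).
rewrite (map_inj_in_uniq finj) size_map => /(_ ul) H1.
have H2 : (size l <= `|Num.floor L1|.+1 * `|Num.floor L2|.+1)%N.
  apply: H1 => _ /mapP[[x y] /H /= [hy hx] ->] /=.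
  move: hx hy; rewrite !ler_distl => hx hy.
  have := @int_itv R _ _ _ L10 hx; have := @int_itv R _ _ _ L20 hy; rewrite /f /=; lia.
apply: le_trans (_ : (`|Num.floor L1|%N.+1 * `|Num.floor L2|%N.+1)%:R <= _).
  by rewrite ler_nat.
rewrite natrM; apply: ler_pM; rewrite ?ler0n //; exact: nat_bound.
Qed.

Lemma int_small (R : realType) (d : int) : -1 < d%:~R :> R -> d%:~R < 1 :> R -> d = 0.
Proof.
move=> h1 h2.
have h3 : (-1 < d)%R by rewrite -(ltr_int R) rmorphN /=.
have h4 : (d < 1)%R by rewrite -(ltr_int R).
lia.
Qed.

Lemma crude (R : realType) (c s q1 q2 al be A B : R) (l : seq (int*int)) :
 c^+2 + s^+2 = 1 -> c != 0 -> 0 <= A -> 0 <= B -> uniq l ->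
 (forall w, w \in l -> al <= (w.1%:~R - q1)*c + (w.2%:~R - q2)*s <= al + A /\
                       be <= -((w.1%:~R - q1)*s) + (w.2%:~R - q2)*c <= be + B) ->
 (size l)%:R <= (A*`|c| + `|s*c| + 1) * (B/`|c| + 1 + 1).
Proof.
move=> Hcs c0 A0 B0 ul H.
pose v (w : int*int) : R := -((w.1%:~R - q1)*s) + (w.2%:~R - q2)*c.
pose g (w : int*int) := (w.1, Num.floor (v w / c)).
have ginj : {in l &, injective g}.
  move=> [x y] [x' y'] _ _ [] /= e1 e2; subst x'; congr pair.
  set t := v (x, y) / c in e2; set t' := v (x, y') / c in e2.
  have ed : (y - y')%:~R = t - t' by rewrite /t /t' /v /= rmorphB /=; field.
  have := floor_le t; have := floorD1_gt t; have := floor_le t'; have := floorD1_gt t'.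
  rewrite e2 rmorphD /= => h1 h2 h3 h4.
  suff : y - y' = 0 by lia.
  by apply: (@int_small R); rewrite ed; lra.
have := @count_fib R (map g l)
  (fun j => q1 + (al + A/2)*c - s*c*j%:~R - s*c/2) ((be + B/2)/c - 1/2)
  (A*`|c| + `|s*c|) (B/`|c| + 1).
rewrite (map_inj_in_uniq ginj) size_map.
have c0' : 0 < `|c| by rewrite normr_gt0.
have hL1 : 0 <= A * `|c| + `|s*c| by apply: addr_ge0; [apply: mulr_ge0|].
have hL2 : 0 <= B / `|c| + 1 by apply: addr_ge0; [apply: divr_ge0|].
move=> /(_ hL1 hL2 ul); rewrite -addrA; apply.
move=> _ /mapP[[x y] /H /= [hu hv] ->] /=.
set u := (x%:~R - q1) * c + (y%:~R - q2) * s in hu.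
set t := v (x, y) / c.
have ht1 := floor_le t; have := floorD1_gt t; rewrite rmorphD /= => ht2.
set j := Num.floor t in ht1 ht2 *.
split.
  have e : j%:~R - ((be + B / 2) / c - 1 / 2) =
           (v (x,y) - (be + B/2)) / c + (j%:~R - t + 1/2) by rewrite /t; field.
  rewrite e; apply: le_trans (ler_normD _ _) _.
  have n1 : `|(v (x,y) - (be + B/2)) / c| <= (B/2) / `|c|.
    rewrite normrM normfV ler_wpM2r // ?invr_ge0 ?normr_ge0 // ler_distl.
    move: hv; rewrite /v /=; lra.
  have n2 : `|j%:~R - t + 1/2| <= 1/2 by rewrite ler_norml; lra.
  have -> : (B / `|c| + 1) / 2 = (B/2) / `|c| + 1/2 by field; rewrite normr_eq0.
  exact: lerD.
have ex : x%:~R - q1 = u * c - (t * c) * s.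
  rewrite /t divfK // /u /v /=.
  transitivity ((x%:~R - q1) * (c^+2 + s^+2)); first by rewrite Hcs mulr1.
  ring.
have e : x%:~R - (q1 + (al + A / 2) * c - s * c * j%:~R - s * c / 2) =
         (u - al - A/2) * c - (s * c) * (t - j%:~R - 1/2).
  have -> : x%:~R = (x%:~R - q1) + q1 by ring.
  rewrite ex; ring.
rewrite e; apply: le_trans (ler_normB _ _) _.
have n1 : `|(u - al - A/2) * c| <= (A/2) * `|c|.
  rewrite normrM ler_pM2r // ler_norml; lra.
have n2 : `|(s * c) * (t - j%:~R - 1/2)| <= `|s*c| / 2.
  rewrite normrM; apply: ler_wpM2l => //; rewrite ler_norml; lra.
have -> : (A * `|c| + `|s * c|) / 2 = (A/2) * `|c| + `|s*c| / 2 by field.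
exact: lerD.
Qed.

Lemma cs_bound (R: realType) (c s x y N : R): c^+2+s^+2 = 1 -> 0 <= N ->
  `|x| <= N/2 -> `|y| <= N/2 -> `|x*c + y*s| <= N * (Num.sqrt 2)/2.
Proof.
move=> Hcs N0; rewrite !ler_norml => /andP[x1 x2] /andP[y1 y2].
have S2 : Num.sqrt (2:R) ^+ 2 = 2 by rewrite sqr_sqrtr // ler0n.
have S0 : 0 <= Num.sqrt (2:R) by apply: sqrtr_ge0.
set S := Num.sqrt 2 in S2 S0 *.
have e : (x*c + y*s)^+2 + (x*s - y*c)^+2 = (x^+2 + y^+2) * (c^+2 + s^+2) by ring.
rewrite Hcs mulr1 in e.
have hx : x^+2 <= N^+2/4 by nra.
have hy : y^+2 <= N^+2/4 by nra.
have hY : (x*c + y*s)^+2 <= (N * S / 2)^+2.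
  have -> : (N * S / 2)^+2 = N^+2 * S^+2 / 4 by field.
  rewrite S2; have := sqr_ge0 (x*s - y*c); lra.
have Y0 : 0 <= N * S / 2 by apply: divr_ge0 => //; apply: mulr_ge0.
set X := x*c + y*s in hY *; set Y := N * S / 2 in hY Y0 *.
apply/andP; split; nra.
Qed.

Lemma mul_small (n : nat) (d : int) (i i' : nat) : (i < n)%N -> (i' < n)%N ->
  n%:Z * d = i'%:Z - i%:Z -> d = 0.
Proof.
move=> hi hi' e.
have [d0|d0|//] := ltgtP d 0.
- have : n%:Z * d <= n%:Z * (-1) by apply: ler_wpM2l => //; lia.
  lia.
- have : n%:Z * 1 <= n%:Z * d by apply: ler_wpM2l => //; lia.
  lia.
Qed.

Lemma main_c (R : realType) (p1 p2 c s a b : R) (l : seq (int*int)) (n : nat) :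
 c^+2+s^+2 = 1 -> c != 0 -> 0 < a -> 0 < b -> uniq l ->
 (forall z, z \in l -> rect p1 p2 c s a b (z.1%:~R, z.2%:~R)) -> (0 < n)%N ->
 (size l * (n * n))%:R <= (n%:R*(a + Num.sqrt 2)*`|c| + `|s*c| + 1) *
                          (n%:R*(b + Num.sqrt 2)/`|c| + 1 + 1).
Proof.
move=> Hcs c0 a0 b0 ul Hl n0.
pose ij := [seq (i,j) | i <- iota 0 n, j <- iota 0 n].
pose L := [seq (n%:Z * z.1 + (p.1)%:Z, n%:Z * z.2 + (p.2)%:Z) | z <- l, p <- ij].
have sL : size L = (size l * (n * n))%N by rewrite /L size_allpairs size_allpairs !size_iota.
have S0 : 0 <= Num.sqrt (2:R) by apply: sqrtr_ge0.
rewrite -sL.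
pose h := Num.sqrt (2:R) / 2.
apply: (@crude R c s (n%:R * p1 + (n%:R - 1)/2) (n%:R * p2 + (n%:R - 1)/2)
         (- (n%:R * h)) (- (n%:R * h))) => //.
- apply: mulr_ge0; rewrite ?ler0n //; apply: addr_ge0 => //; exact: ltW.
- apply: mulr_ge0; rewrite ?ler0n //; apply: addr_ge0 => //; exact: ltW.
- apply: allpairs_uniq => //.
    apply: allpairs_uniq; rewrite ?iota_uniq //.
    by move=> [i j] [i' j'] _ _ /= [-> ->].
  move=> [z0 [i j]] [z0' [i' j']] H1 H2 /=.
  have hp : (i, j) \in ij by move: H1 => /allpairsP[[x y] [/= _ ? [_ ->]]].
  have hp' : (i', j') \in ij by move: H2 => /allpairsP[[x y] [/= _ ? [_ ->]]].
  move: hp hp' => /allpairsP[[i1 j1] [hi hj [-> ->]]] /allpairsP[[i1' j1'] [hi' hj' [-> ->]]] /=.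
  move: hi hj hi' hj'; rewrite !mem_iota /= !add0n => hi hj hi' hj' [e1 e2].
  have d1 : z0.1 = z0'.1.
    have := @mul_small n (z0.1 - z0'.1) i1 i1' hi hi'; rewrite mulrBr.
    by move=> hh; apply/eqP; rewrite -subr_eq0; apply/eqP; apply: hh; lra.
  have d2 : z0.2 = z0'.2.
    have := @mul_small n (z0.2 - z0'.2) j1 j1' hj hj'; rewrite mulrBr.
    by move=> hh; apply/eqP; rewrite -subr_eq0; apply/eqP; apply: hh; lra.
  have -> : z0 = z0' by rewrite [z0]surjective_pairing [z0']surjective_pairing d1 d2.
  rewrite d1 d2 in e1 e2; move/addrI: e1 => [->]; by move/addrI: e2 => [->].
move=> w /allpairsP[[z [i j]] [hz hp ew]]; simpl in hz, hp, ew; subst w => /=.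
move: hp => /allpairsP[[i1 j1] [hi hj [-> ->]]] /=.
move: hi hj; rewrite !mem_iota /= !add0n => hi hj.
have [t [r [/andP[t0 ta] /andP[r0 rb] ez1 ez2]]] := Hl _ hz.
move: ez1 ez2 => /= ez1 ez2.
have eW1 : (n%:Z * z.1 + i1%:Z)%:~R = n%:R * z.1%:~R + i1%:R :> R.
  by rewrite rmorphD rmorphM.
have eW2 : (n%:Z * z.2 + j1%:Z)%:~R = n%:R * z.2%:~R + j1%:R :> R.
  by rewrite rmorphD rmorphM.
rewrite eW1 eW2 ez1 ez2.
have n0' : 0 <= n%:R :> R by rewrite ler0n.
have bi : `|i1%:R - (n%:R - 1)/2| <= n%:R/2 :> R.
  have : (i1.+1 <= n)%N by []. rewrite -(ler_nat R) -addn1 natrD.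
  have := ler0n R i1; have := ler0n R j1.
  rewrite ler_norml; move=> ? ? hh; apply/andP; split; lra.
have bj : `|j1%:R - (n%:R - 1)/2| <= n%:R/2 :> R.
  have : (j1.+1 <= n)%N by []. rewrite -(ler_nat R) -addn1 natrD.
  have := ler0n R i1; have := ler0n R j1.
  rewrite ler_norml; move=> ? ? hh; apply/andP; split; lra.
set di := i1%:R - (n%:R - 1)/2 in bi *.
set dj := j1%:R - (n%:R - 1)/2 in bj *.
have B1 := @cs_bound _ _ _ _ _ _ Hcs n0' bi bj.
have B2 : `|dj * c + (- di) * s| <= n%:R * Num.sqrt 2 / 2.
  by apply: cs_bound => //; rewrite normrN.
move: B1 B2; rewrite !ler_norml => /andP[B1 B1'] /andP[B2 B2'].
have nt0 : 0 <= n%:R * t by apply: mulr_ge0.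
have nta : n%:R * t <= n%:R * a by apply: ler_wpM2l.
have nr0 : 0 <= n%:R * r by apply: mulr_ge0.
have nrb : n%:R * r <= n%:R * b by apply: ler_wpM2l.
have eu : (n%:R * (p1 + t * c - r * s) + i1%:R - (n%:R * p1 + (n%:R - 1) / 2)) * c +
    (n%:R * (p2 + t * s + r * c) + j1%:R - (n%:R * p2 + (n%:R - 1) / 2)) * s
    = n%:R * t * (c^+2 + s^+2) + (di * c + dj * s) by rewrite /di /dj; ring.
have ev : - ((n%:R * (p1 + t * c - r * s) + i1%:R - (n%:R * p1 + (n%:R - 1) / 2)) * s) +
    (n%:R * (p2 + t * s + r * c) + j1%:R - (n%:R * p2 + (n%:R - 1) / 2)) * c
    = n%:R * r * (c^+2 + s^+2) + (dj * c + (- di) * s) by rewrite /di /dj; ring.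
rewrite eu ev Hcs !mulr1 /h.
have ea : n%:R * (a + Num.sqrt 2) = n%:R * a + 2 * (n%:R * Num.sqrt 2 / 2) by field.
have eb : n%:R * (b + Num.sqrt 2) = n%:R * b + 2 * (n%:R * Num.sqrt 2 / 2) by field.
have eh : n%:R * (Num.sqrt (2:R) / 2) = n%:R * Num.sqrt 2 / 2 by rewrite mulrA.
rewrite ea eb eh.
split; apply/andP; split; lra.
Qed.

Lemma limit_arg (R: realType) (N P K1 K2 : R) : 0 <= K1 -> 0 <= K2 ->
  (forall n : nat, (0 < n)%N -> n%:R^+2 * N <= n%:R^+2 * P + n%:R * K1 + K2) -> N <= P.
Proof.
move=> K10 K20 H; rewrite leNgt; apply/negP => hlt.
set x := (K1 + K2) / (N - P).
have x1 : x <= (`|Num.ceil x|%N)%:R.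
  rewrite natr_absz; apply: le_trans (ceil_ge x) _.
  by rewrite ler_int ler_norm.
set n := (`|Num.ceil x|%N).+1.
have hn : x < n%:R by rewrite /n -addn1 natrD; lra.
have n1 : 1 <= n%:R :> R by rewrite ler1n.
have := H n isT.
have NP : 0 < N - P by lra.
have : K1 + K2 < n%:R * (N - P).
  by rewrite -ltr_pdivrMr // mulrC.
move=> h1 h2.
have h3 : n%:R * (K1 + K2) < n%:R * (n%:R * (N - P)) by rewrite ltr_pM2l //; lra.
nra.
Qed.

Lemma swap_inj : injective (fun z : int * int => (z.2, z.1)).
Proof. by move=> [? ?] [? ?] [-> ->]. Qed.

Theorem proposition12 (R : realType) (p1 p2 c s a b : R) :
  c ^+ 2 + s ^+ 2 = 1 -> 0 < a -> 0 < b ->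
  N_le (rect p1 p2 c s a b) ((a + Num.sqrt 2) * (b + Num.sqrt 2)).
Proof.
move=> Hcs a0 b0.
wlog c0 : p1 p2 c s Hcs / c != 0.
  move=> W; case: (eqVneq c 0) => [c0|]; last exact: W.
  subst c; move=> l ul Hl.
  have Hs : s ^+ 2 + 0 ^+ 2 = 1 by rewrite expr0n /= addr0 -Hcs expr0n /= add0r.
  have s0 : s != 0 by apply/eqP => s0; move: Hs; rewrite s0 expr0n /= addr0; apply/eqP; rewrite eq_sym oner_eq0.
  have := W p2 (p1 - b * s) s 0 Hs s0 (map (fun z : int * int => (z.2, z.1)) l).
  rewrite size_map; apply; first by rewrite map_inj_uniq //; exact: swap_inj.
  move=> _ /mapP[[x y] /Hl [t [r [ht hr /= ex ey]]] ->] /=.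
  exists t, (b - r); split => //.
  - by move: hr => /andP[? ?]; apply/andP; split; lra.
  - by rewrite /= ey; ring.
  - by rewrite /= ex; ring.
move=> l ul Hl.
have S0 : 0 <= Num.sqrt (2:R) by apply: sqrtr_ge0.
have cn : 0 < `|c| by rewrite normr_gt0.
apply: (@limit_arg R _ _ (2 * (a + Num.sqrt 2) * `|c| + (`|s*c| + 1) * (b + Num.sqrt 2) / `|c|) (2 * (`|s*c| + 1))).
- apply: addr_ge0; apply: mulr_ge0 => //; rewrite ?invr_ge0 ?normr_ge0 //;
    apply: mulr_ge0 => //; try apply: addr_ge0 => //; lra.
- apply: mulr_ge0 => //; apply: addr_ge0 => //.
move=> n n0.
have := @main_c R p1 p2 c s a b l n Hcs c0 a0 b0 ul Hl n0.
rewrite natrM natrM -expr2 mulrC.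
move=> h; apply: le_trans h _; rewrite le_eqVlt; apply/orP; left; apply/eqP.
field; by rewrite normr_eq0.
Qed.
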